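(* Let $L=\{<,\ldots\}$ be a countable first order language containing a binary relation symbol $<$, and let $T$ be a complete $L$-theory with Skolem functions in which $<$ is interpreted as a linear order. Then: (i) If $T$ satisfies the inaccessibility scheme, then $T$ satisfies the regularity scheme for formulas with $|\bar{x}|=1$. (ii) If $T$ satisfies the regularity scheme for formulas with $|\bar{x}|=1$, then $T$ satisfies the regularity scheme (for formulas with $\bar{x}$ of arbitrary finite length).
   Context: For a formula $\varphi(\bar{x},\bar{t})$ and tuples $\bar{y}_0,\bar{y}_1$ of the same length as $\bar{x}$, write $E_{\varphi}(\bar{y}_0,\bar{y}_1;z_0)$ for $(\forall \bar{t}<z_0)(\varphi(\bar{y}_0,\bar{t})\leftrightarrow\varphi(\bar{y}_1,\bar{t}))$; here $\bar{t}<z_0$ means every coordinate of $\bar{t}$ is $<z_0$. $T$ satisfies the inaccessibility scheme if for every $L$-formula $\varphi(\bar{x},\bar{t})$ (with $\bar{x}$ of any finite length), $T\models (\forall z_0)(\exists z_1>z_0)(\forall\bar{y}_0)(\exists\bar{y}_1<z_1)E_{\varphi}(\bar{y}_0,\bar{y}_1;z_0)$. ''$T$ has Skolem functions'' means that for every formula $\theta(y,\bar{x})$ there is a term $\tau(\bar{x})$ of $L$ with $T\models \forall\bar{x}(\exists y\,\theta(y,\bar{x})\to\theta(\tau(\bar{x}),\bar{x}))$. For $\bar{x}=(x_1,\ldots,x_n)$ and a formula $\chi(\bar{x})$ with parameters from a model $M$, $\chi(\bar{x})$ is $\bar{x}$-unbounded in $M$ if $M\models(\forall\alpha_1)(\exists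 x_1>\alpha_1)\cdots(\forall\alpha_n)(\exists x_n>\alpha_n)\chi(\bar{x})$; otherwise it is $\bar{x}$-bounded. $T$ satisfies the regularity scheme (for formulas with $|\bar{x}|=k$, resp. for all $\bar{x}$) if for every $L$-formula $\varphi(\bar{x},\bar{y},\bar{t})$ (with $|\bar{x}|=k$, resp. arbitrary), every model $M\models T$, every $y_0\in M$ and every $\bar{b}\in M$ with $|\bar{b}|=|\bar{t}|$: if $(\exists\bar{y}<y_0)\varphi(\bar{x},\bar{y},\bar{b})$ is $\bar{x}$-unbounded in $M$, then there is $\bar{y}_1\in M$ with $\bar{y}_1<y_0$ (coordinatewise) such that $\varphi(\bar{x},\bar{y}_1,\bar{b})$ is $\bar{x}$-unbounded in $M$. *)

(* Defs.v *)
From HB Require Import structures.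
From mathcomp Require Import all_boot.
Set Implicit Arguments. Unset Strict Implicit. Unset Printing Implicit Defensive.

Record language := Language {
  Fsym : countType;              (* function symbols (constants = arity 0) *)
  Rsym : countType;
  farity : Fsym -> nat;
  rarity : Rsym -> nat;
  ltsym : Rsym;
  ltsym_arity : rarity ltsym = 2 }.

Section FOL.
Variable L : language.

Inductive term := Var of nat | App of Fsym L & seq term.

Inductive formula :=
  | Bot
  | Eq of term & term
  | Rel of Rsym L & seq term
  | Imp of formula & formula
  | And of formula & formula
  | Or of formula & formula
  | Forall of nat & formula
  | Exists of nat & formula.

Definition Neg (f : formula) := Imp f Bot.

Fixpoint wf_term (t : term) : bool :=
  match t with
  | Var _ => true
  | App f ts => (size ts == farity f) && all wf_term ts
  end.

Fixpoint vars_term (t : term) : seq nat :=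
  match t with
  | Var n => [:: n]
  | App f ts => flatten (map vars_term ts)
  end.

Fixpoint wf_formula (f : formula) : bool :=
  match f with
  | Bot => true
  | Eq t1 t2 => wf_term t1 && wf_term t2
  | Rel r ts => (size ts == rarity r) && all wf_term ts
  | Imp f1 f2 | And f1 f2 | Or f1 f2 => wf_formula f1 && wf_formula f2
  | Forall _ f1 | Exists _ f1 => wf_formula f1
  end.

Fixpoint fv (f : formula) : seq nat :=
  match f with
  | Bot => [::]
  | Eq t1 t2 => vars_term t1 ++ vars_term t2
  | Rel r ts => flatten (map vars_term ts)
  | Imp f1 f2 | And f1 f2 | Or f1 f2 => fv f1 ++ fv f2
  | Forall x f1 | Exists x f1 => filter (fun v => v != x) (fv f1)
  end.

Definition sentence (f : formula) : bool := wf_formula f && (fv f == [::]).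

(* L-structures (nonempty); symbols are interpreted on argument lists, only
   lists of the correct arity matter for well-formed formulas *)
Record structure := Structure {
  carrier :> Type;
  inhabitant : carrier;
  interpF : Fsym L -> seq carrier -> carrier;
  interpR : Rsym L -> seq carrier -> Prop }.

Section Sem.
Variable M : structure.

Definition upd (e : nat -> M) (x : nat) (a : M) : nat -> M :=
  fun v => if v == x then a else e v.

Fixpoint upd_list (e : nat -> M) (xs : seq nat) (vs : seq M) : nat -> M :=
  match xs, vs with
  | x :: xs', v :: vs' => upd_list (upd e x v) xs' vs'
  | _, _ => e
  end.

Fixpoint eval (e : nat -> M) (t : term) : M :=
  match t with
  | Var n => e n
  | App f ts => @interpF M f (map (eval e) ts)
  end.

Fixpoint sat (e : nat -> M) (f : formula) : Prop :=
  match f with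
  | Bot => False
  | Eq t1 t2 => eval e t1 = eval e t2
  | Rel r ts => @interpR M r (map (eval e) ts)
  | Imp f1 f2 => sat e f1 -> sat e f2
  | And f1 f2 => sat e f1 /\ sat e f2
  | Or f1 f2 => sat e f1 \/ sat e f2
  | Forall x f1 => forall a : M, sat (upd e x a) f1
  | Exists x f1 => exists a : M, sat (upd e x a) f1
  end.

Definition ltM (a b : M) : Prop := @interpR M (ltsym L) [:: a; b].

Fixpoint below (z : M) (vs : seq M) : Prop :=
  match vs with
  | [::] => True
  | v :: vs' => ltM v z /\ below z vs'
  end.

Fixpoint unbounded (n : nat) (chi : seq M -> Prop) : Prop :=
  match n with
  | 0 => chi [::]
  | n'.+1 => forall a : M, exists x : M,
      ltM a x /\ unbounded n' (fun l => chi (x :: l))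
  end.

End Sem.

Definition theory := formula -> Prop.

Definition L_theory (T : theory) : Prop := forall f, T f -> sentence f.

Definition is_model (M : structure) (T : theory) : Prop :=
  forall f, T f -> forall e : nat -> M, sat e f.

Definition entails (T : theory) (f : formula) : Prop :=
  forall M : structure, is_model M T -> forall e : nat -> M, sat e f.

Definition complete (T : theory) : Prop :=
  (exists M : structure, is_model M T) /\
  forall s, sentence s -> entails T s \/ entails T (Neg s).

Definition lt_linear (T : theory) : Prop :=
  forall M : structure, is_model M T ->
    (forall a : M, ~ ltM a a) /\
    (forall a b c : M, ltM a b -> ltM b c -> ltM a c) /\
    (forall a b : M, ltM a b \/ a = b \/ ltM b a).

Definition has_skolem (T : theory) : Prop :=
  forall (theta : formula) (y : nat) (xs : seq nat),
    wf_formula theta -> y \notin xs -> {subset fv theta <= y :: xs} ->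
    exists tau : term, wf_term tau /\ {subset vars_term tau <= xs} /\
      forall M : structure, is_model M T -> forall e : nat -> M,
        (exists a : M, sat (upd e y a) theta) ->
        sat (upd e y (eval e tau)) theta.

Definition inaccessibility (T : theory) : Prop :=
  forall (phi : formula) (xs ts : seq nat),
    wf_formula phi -> uniq (xs ++ ts) -> {subset fv phi <= xs ++ ts} ->
    forall M : structure, is_model M T -> forall (e : nat -> M) (z0 : M),
      exists z1 : M, ltM z0 z1 /\
        forall ys0 : seq M, size ys0 = size xs ->
          exists ys1 : seq M, size ys1 = size xs /\ below z1 ys1 /\
            forall tv : seq M, size tv = size ts -> below z0 tv ->
              (sat (upd_list (upd_list e xs ys0) ts tv) phi <->
               sat (upd_list (upd_list e xs ys1) ts tv) phi).

Definition regularity_for (P : nat -> Prop) (T : theory) : Prop :=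
  forall (phi : formula) (xs ys ts : seq nat),
    P (size xs) ->
    wf_formula phi -> uniq (xs ++ ys ++ ts) ->
    {subset fv phi <= xs ++ ys ++ ts} ->
    forall M : structure, is_model M T ->
    forall (e : nat -> M) (y0 : M) (bs : seq M), size bs = size ts ->
      unbounded (size xs) (fun xv : seq M =>
        exists yv : seq M, size yv = size ys /\ below y0 yv /\
          sat (upd_list (upd_list (upd_list e xs xv) ys yv) ts bs) phi) ->
      exists yv1 : seq M, size yv1 = size ys /\ below y0 yv1 /\
        unbounded (size xs) (fun xv : seq M =>
          sat (upd_list (upd_list (upd_list e xs xv) ys yv1) ts bs) phi).

End FOL.

(* Main.v *)
Require Import Defs.
From mathcomp Require Import all_boot.
From Stdlib Require Import Classical FunctionalExtensionality.
Set Implicit Arguments. Unset Strict Implicit. Unset Printing Implicit Defensive.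

Section Aux.
Variable L : language.

Lemma upd_same (M : structure L) (e : nat -> M) x c : upd e x c x = c.
Proof. by rewrite /upd eqxx. Qed.
Lemma upd_other (M : structure L) (e : nat -> M) x c v : v != x -> upd e x c v = e v.
Proof. by rewrite /upd => /negbTE ->. Qed.
Lemma upd_comm (M : structure L) (e : nat -> M) x y c d :
  x != y -> upd (upd e x c) y d = upd (upd e y d) x c.
Proof.
move=> Hxy; apply: functional_extensionality => v; rewrite /upd.
have [Hvy|Hvy] := eqVneq v y; have [Hvx|Hvx] := eqVneq v x => //.
by subst; rewrite eqxx in Hxy.
Qed.

Lemma upd_list_upd (M : structure L) (e : nat -> M) x c xs vs :
  x \notin xs -> upd_list (upd e x c) xs vs = upd (upd_list e xs vs) x c.
Proof.
elim: xs vs e => [|y xs IH] [|v vs] e //=.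
rewrite inE negb_or => /andP[Hxy Hx]. by rewrite upd_comm // IH.
Qed.

Lemma upd_list_cat (M : structure L) (e : nat -> M) xs ys vs ws :
  size vs = size xs -> upd_list e (xs ++ ys) (vs ++ ws) = upd_list (upd_list e xs vs) ys ws.
Proof. elim: xs vs e => [|x xs IH] [|v vs] e //= [] H. by rewrite IH. Qed.

Lemma upd_list_comm (M : structure L) (e : nat -> M) A B va vb :
  (forall v, v \in A -> v \notin B) ->
  upd_list (upd_list e A va) B vb = upd_list (upd_list e B vb) A va.
Proof.
elim: A va e => [|a A IH] [|c va] e //= H.
rewrite IH; last by move=> v Hv; apply: H; rewrite inE Hv orbT.
by rewrite upd_list_upd // H // inE eqxx.
Qed.

Lemma eval_coinc (M : structure L) (e1 e2 : nat -> M) :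
  forall t, (forall v, v \in vars_term t -> e1 v = e2 v) -> eval e1 t = eval e2 t.
Proof.
fix IH 1. move=> [n|f ts] H /=.
- by apply: H; rewrite inE.
- congr (interpF _ _). move: ts H. fix IHl 1. move=> [|t ts] H //=. congr cons.
  + apply: IH => v Hv; apply: H; by rewrite /= mem_cat Hv.
  + apply: IHl => v Hv; apply: H; by rewrite /= mem_cat Hv orbT.
Qed.

Lemma sat_coinc (M : structure L) f (e1 e2 : nat -> M) :
  (forall v, v \in fv f -> e1 v = e2 v) -> (sat e1 f <-> sat e2 f).
Proof.
elim: f e1 e2 => [|t1 t2|r ts|f1 IH1 f2 IH2|f1 IH1 f2 IH2|f1 IH1 f2 IH2|x f IH|x f IH] e1 e2 H /=.
- done.
- rewrite (@eval_coinc _ e1 e2 t1); last by move=> v Hv; apply: H; rewrite mem_cat Hv.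
  rewrite (@eval_coinc _ e1 e2 t2) //; by move=> v Hv; apply: H; rewrite mem_cat Hv orbT.
- have -> // : map (eval e1) ts = map (eval e2) ts.
  elim: ts H => [|t ts IHts] H //=.
  rewrite (@eval_coinc _ e1 e2 t); last by move=> v Hv; apply: H; rewrite /= mem_cat Hv.
  by rewrite IHts // => v Hv; apply: H; rewrite /= mem_cat Hv orbT.
- have h1 : forall v, v \in fv f1 -> e1 v = e2 v by move=> v Hv; apply: H; rewrite mem_cat Hv.
  have h2 : forall v, v \in fv f2 -> e1 v = e2 v by move=> v Hv; apply: H; rewrite mem_cat Hv orbT.
  move: (IH1 _ _ h1) (IH2 _ _ h2); tauto.
- have h1 : forall v, v \in fv f1 -> e1 v = e2 v by move=> v Hv; apply: H; rewrite mem_cat Hv.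
  have h2 : forall v, v \in fv f2 -> e1 v = e2 v by move=> v Hv; apply: H; rewrite mem_cat Hv orbT.
  move: (IH1 _ _ h1) (IH2 _ _ h2); tauto.
- have h1 : forall v, v \in fv f1 -> e1 v = e2 v by move=> v Hv; apply: H; rewrite mem_cat Hv.
  have h2 : forall v, v \in fv f2 -> e1 v = e2 v by move=> v Hv; apply: H; rewrite mem_cat Hv orbT.
  move: (IH1 _ _ h1) (IH2 _ _ h2); tauto.
- have hx : forall a v, v \in fv f -> upd e1 x a v = upd e2 x a v.
    move=> a v Hv; rewrite /upd; case: eqP => // /eqP Hvx; apply: H; by rewrite mem_filter Hvx.
  split => Hs a; [apply: (proj1 (IH _ _ (hx a))) | apply: (proj2 (IH _ _ (hx a)))]; exact: Hs.
- have hx : forall a v, v \in fv f -> upd e1 x a v = upd e2 x a v.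
    move=> a v Hv; rewrite /upd; case: eqP => // /eqP Hvx; apply: H; by rewrite mem_filter Hvx.
  split => -[a Hs]; exists a; [apply: (proj1 (IH _ _ (hx a))) | apply: (proj2 (IH _ _ (hx a)))]; exact: Hs.
Qed.

Lemma sat_upd_fresh (M : structure L) (e : nat -> M) a c f :
  a \notin fv f -> (sat (upd e a c) f <-> sat e f).
Proof.
move=> Ha; apply: sat_coinc => v Hv; rewrite /upd; case: eqP => // Hva; subst.
by rewrite Hv in Ha.
Qed.

Lemma eval_upd_fresh (M : structure L) (e : nat -> M) a c t :
  a \notin vars_term t -> eval (upd e a c) t = eval e t.
Proof.
move=> Ha; apply: eval_coinc => v Hv; rewrite /upd; case: eqP => // Hva; subst.
by rewrite Hv in Ha.
Qed.

Lemma unbounded_ext (M : structure L) n (P Q : seq M -> Prop) :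
  (forall l, P l -> Q l) -> unbounded n P -> unbounded n Q.
Proof.
elim: n P Q => [|n IH] P Q H /=; first exact: H.
move=> HP a. have [x [Hx Hu]] := HP a. exists x; split => //.
by apply: IH Hu => l; apply: H.
Qed.

Fixpoint Ufor (a : nat) (xs : seq nat) (f : formula L) : formula L :=
  match xs with
  | [::] => f
  | x :: xs' => Forall a (Exists x (And (Rel (ltsym L) [:: Var L a; Var L x]) (Ufor a xs' f)))
  end.

Lemma Ufor_wf a xs f : wf_formula f -> wf_formula (Ufor a xs f).
Proof. elim: xs => //= x xs IH Hf. by rewrite ltsym_arity eqxx IH. Qed.

Lemma Ufor_fv a xs f v : v \in fv (Ufor a xs f) -> v \in fv f /\ v \notin xs.
Proof.
elim: xs => [|x xs IH] //.
have -> : fv (Ufor a (x :: xs) f) =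
  filter (fun v => v != a) (filter (fun v => v != x) ([:: a; x] ++ fv (Ufor a xs f))) by [].
rewrite !mem_filter => /andP[Hva /andP[Hvx]]; rewrite mem_cat => /orP[|/IH [H1 H2]].
  by rewrite !inE (negbTE Hva) (negbTE Hvx).
by split => //; rewrite inE negb_or Hvx H2.
Qed.

Lemma Ufor_sat (M : structure L) (e : nat -> M) a xs f :
  a \notin xs -> a \notin fv f ->
  (sat e (Ufor a xs f) <-> unbounded (size xs) (fun l => sat (upd_list e xs l) f)).
Proof.
elim: xs e => [|x xs IH] e /=; first by [].
rewrite inE negb_or => /andP[Hax Haxs] Haf.
have key : forall c d, sat (upd (upd e a c) x d) (Ufor a xs f) <->
    unbounded (size xs) (fun l => sat (upd_list (upd e x d) xs l) f).
  move=> c d. rewrite upd_comm //. split => H.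
  - apply: unbounded_ext (proj1 (IH _ Haxs Haf) H) => l. rewrite upd_list_upd //. exact: (proj1 (sat_upd_fresh _ _ Haf)).
  - apply: (proj2 (IH _ Haxs Haf)); apply: unbounded_ext H => l.
    rewrite [upd_list (upd (upd _ _ _) _ _) _ _]upd_list_upd //; exact: (proj2 (sat_upd_fresh _ _ Haf)).
split => H c.
- have [d [Hcd Hd]] := H c. exists d. split; last exact: (proj1 (key c d) Hd).
  move: Hcd; by rewrite /ltM /= upd_same (upd_other _ _ Hax) upd_same.
- have [d [Hcd Hd]] := H c. exists d. split; last exact: (proj2 (key c d) Hd).
  move: Hcd; by rewrite /ltM /= upd_same (upd_other _ _ Hax) upd_same.
Qed.

End Aux.

Lemma le_sumn (l : seq nat) v : v \in l -> v <= sumn l.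
Proof.
elim: l => //= y l IH; rewrite inE => /orP[/eqP->|/IH H]; first exact: leq_addr.
exact: leq_trans H (leq_addl _ _).
Qed.

Lemma fresh_notin (l : seq nat) : (sumn l).+1 \notin l.
Proof. apply/negP => /le_sumn; by rewrite ltnn. Qed.

Lemma uniq_cat_notin (s1 s2 : seq nat) v : uniq (s1 ++ s2) -> v \in s2 -> v \notin s1.
Proof.
move=> U H; apply/negP => H1; move: U; rewrite cat_uniq => /and3P[_ /hasPn Hn _].
by move: (Hn v H); rewrite /= H1.
Qed.

Section Order.
Variable L : language.
Variable M : structure L.
Hypothesis Htr : forall a b c : M, ltM a b -> ltM b c -> ltM a c.
Hypothesis Htot : forall a b : M, ltM a b \/ a = b \/ ltM b a.

Lemma below_trans (y z : M) l : below y l -> ltM y z -> below z l.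
Proof. elim: l => //= h l IH [H1 H2] Hyz; split; [exact: Htr H1 Hyz | exact: IH]. Qed.

Lemma below_cat (z : M) l1 l2 : below z l1 -> below z l2 -> below z (l1 ++ l2).
Proof. elim: l1 => //= h l IH [H1 H2] H3; split => //; exact: IH. Qed.

Lemma above_list : (forall a : M, exists x, ltM a x) -> forall l : seq M, exists z, below z l.
Proof.
move=> Hnm; elim=> [|h l [z Hz]] /=; first by exists (inhabitant M).
have [h' Hh'] := Hnm h. case: (Htot z h') => [Hzh|[Ezh|Hhz]].
- exists h'; split => //; exact: below_trans Hz Hzh.
- exists z; subst; split => //.
- exists z; split => //; exact: Htr Hh' Hhz.
Qed.
End Order.

Lemma part1 (L : language) (T : theory L) :
  has_skolem T -> lt_linear T -> inaccessibility T -> regularity_for (fun n => n = 1%N) T.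
Proof.
move=> Hsk Hlin Hin phi xs ys ts Hsz Hwf Huniq Hfv M HM e y0 bs Hbs H.
case: xs Hsz Huniq Hfv H => [|x [|x' xs]] //= _ Huniq Hfv H.
have [Hirr [Htr Htot]] := Hlin M HM.
move: (Huniq) => /andP[Hx Hu].
have Hxys : x \notin ys by move: Hx; rewrite mem_cat negb_or => /andP[].
have Hxts : x \notin ts by move: Hx; rewrite mem_cat negb_or => /andP[].
pose E0 := fun yv => upd_list (upd_list e ys yv) ts bs.
have Henv : forall d yv, upd_list (upd_list (upd e x d) ys yv) ts bs = upd (E0 yv) x d.
  by move=> d yv; rewrite upd_list_upd // upd_list_upd.
apply: NNPP => G.
pose a := (sumn (x :: ys ++ ts)).+1.
have Ha : a \notin x :: ys ++ ts := fresh_notin _.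
have Hafv : a \notin fv phi by apply/negP => /Hfv /= Hm; rewrite Hm in Ha.
have Hax : a != x by move: Ha; rewrite inE negb_or => /andP[].
have Hayt : a \notin ys ++ ts by move: Ha; rewrite inE negb_or => /andP[].
pose theta := Forall x (Imp (Rel (ltsym L) [:: Var L a; Var L x]) (Neg phi)).
have Hwth : wf_formula theta by rewrite /= ltsym_arity Hwf.
have Hfvth : {subset fv theta <= a :: ys ++ ts}.
  have -> : fv theta = filter (fun v => v != x) ([:: a; x] ++ (fv phi ++ [::])) by [].
  move=> v; rewrite mem_filter cats0 mem_cat !inE => /andP[Hvx /orP[/orP[->//|Hv]|/Hfv]].
    by rewrite Hv in Hvx.
  by rewrite /= inE (negbTE Hvx) /= => ->; rewrite orbT.
have [tau [Hwt [Hvt Htau]]] := Hsk theta a (ys ++ ts) Hwth Hayt Hfvth.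
have Hnm : forall c : M, exists d, ltM c d by move=> c; have [d [Hd _]] := H c; exists d.
have [z0 [Hy0z0 Hbz0]] := above_list Htr Htot Hnm (y0 :: bs).
have Hwf2 : wf_formula (Eq (Var L x) tau) by rewrite /= Hwt.
have Hfv2 : {subset fv (Eq (Var L x) tau) <= [:: x] ++ ys ++ ts}.
  move=> v; rewrite /= inE => /orP[/eqP->|/Hvt Hv]; by rewrite /= inE ?eqxx ?Hv ?orbT.
have [z1 [Hz01 Hin1]] := Hin (Eq (Var L x) tau) [:: x] (ys ++ ts) Hwf2 Huniq Hfv2 M HM e z0.
have [x0 [Hz1x0 [yv [Hyv [Hbyv Hsat]]]]] := H z1.
have [c Hc] : exists c, forall d, ltM c d -> ~ sat (upd (E0 yv) x d) phi.
  apply: NNPP => K; apply: G; exists yv; do 2!split => //.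
  move=> c; apply: NNPP => K2; apply: K; exists c => d Hcd Hs; apply: K2.
  by exists d; split => //; rewrite Henv.
pose alpha := eval (E0 yv) tau.
have Hth : sat (upd (E0 yv) a alpha) theta.
  apply: Htau => //. exists c => d /=.
  rewrite upd_same (upd_other _ _ Hax) upd_same => Hcd.
  rewrite upd_comm // => Hs; apply: (Hc d Hcd).
  exact: (proj1 (sat_upd_fresh _ _ Hafv) Hs).
have Hnlt : ~ ltM alpha x0.
  move=> Hlt; apply: (Hth x0).
    by rewrite /= upd_same (upd_other _ _ Hax) upd_same.
  rewrite upd_comm //; apply: (proj2 (sat_upd_fresh _ _ Hafv)); by rewrite -Henv.
have Hz1a : ltM z1 alpha.
  case: (Htot alpha x0) => [//|[E|H']]; first by rewrite E.
  exact: Htr Hz1x0 H'.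
have [ys1 [Hys1 [Hbys1 Heq]]] := Hin1 [:: alpha] erefl.
case: ys1 Hys1 Hbys1 Heq => [|v1 [|??]] //= _ [Hv1 _] Heq.
have Hs2 : size (yv ++ bs) = size (ys ++ ts) by rewrite !size_cat Hyv Hbs.
have Hb2 : below z0 (yv ++ bs) by apply: below_cat => //; exact: below_trans Hbyv Hy0z0.
have := Heq (yv ++ bs) Hs2 Hb2.
have Hxt : x \notin vars_term tau by apply/negP => /Hvt Hm; rewrite Hm in Hx.
rewrite /= !upd_list_upd // !upd_list_cat // !upd_same !eval_upd_fresh // -/(E0 yv) -/alpha.
case=> /(_ erefl) Ev1 _. subst v1.
exact: Hirr (Htr _ _ _ Hv1 Hz1a).
Qed.

Lemma part2 (L : language) (T : theory L) :
  regularity_for (fun n => n = 1%N) T -> forall k, regularity_for (fun n => n = k) T.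
Proof.
move=> R1; elim=> [|k IHk] phi xs ys ts Hsz Hwf Huniq Hfv M HM e y0 bs Hbs H.
  by move: H; rewrite Hsz.
case: xs Hsz Huniq Hfv H => [|x1 xs'] //= [Hsz] Huniq Hfv H.
move: (Huniq) => /andP[Hx1 Hu'].
have Hx1xs : x1 \notin xs' by move: Hx1; rewrite !mem_cat !negb_or => /and3P[].
have Hx1ys : x1 \notin ys by move: Hx1; rewrite !mem_cat !negb_or => /and3P[].
have Hx1ts : x1 \notin ts by move: Hx1; rewrite !mem_cat !negb_or => /and3P[].
pose a := (sumn (x1 :: xs' ++ ys ++ ts)).+1.
have Ha : a \notin x1 :: xs' ++ ys ++ ts := fresh_notin _.
have Hafv : a \notin fv phi by apply/negP => /Hfv /= Hm; rewrite Hm in Ha.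
have Haxs : a \notin xs' by move: Ha; rewrite inE !mem_cat !negb_or => /and4P[].
have Dts : forall v, v \in ts -> v \notin xs'.
  move=> v Hv; apply: (uniq_cat_notin Hu'); by rewrite mem_cat Hv orbT.
have Dys : forall v, v \in ys -> v \notin xs'.
  move=> v Hv; apply: (uniq_cat_notin Hu'); by rewrite mem_cat Hv.
have K1 : forall d l yv, upd_list (upd_list (upd_list (upd e x1 d) xs' l) ys yv) ts bs
    = upd (upd_list (upd_list (upd_list e xs' l) ys yv) ts bs) x1 d.
  by move=> d l yv; rewrite upd_list_upd // upd_list_upd // upd_list_upd.
have K2 : forall d l yv, upd_list (upd_list (upd_list (upd e x1 d) ys yv) ts bs) xs' l
    = upd_list (upd_list (upd_list (upd e x1 d) xs' l) ys yv) ts bs.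
  move=> d l yv; rewrite (upd_list_comm _ _ _ Dts).
  by rewrite (upd_list_comm _ _ _ Dys).
pose U := Ufor a xs' phi.
have HA : unbounded (size [:: x1]) (fun xv => exists yv, size yv = size ys /\ below y0 yv /\
    sat (upd_list (upd_list (upd_list e [:: x1] xv) ys yv) ts bs) U).
  move=> c /=. have [d [Hcd Hd]] := H c. exists d; split => //.
  have Hu2 : uniq (xs' ++ ys ++ ts ++ [:: x1]).
    by rewrite !catA cats1 rcons_uniq -!catA Hx1 Hu'.
  have Hfv2 : {subset fv phi <= xs' ++ ys ++ ts ++ [:: x1]}.
    move=> v /Hfv; rewrite /= !(inE, mem_cat).
    by case: (v == x1); case: (v \in xs'); case: (v \in ys); case: (v \in ts).
  have Hbs2 : size (bs ++ [:: d]) = size (ts ++ [:: x1]) by rewrite !size_cat Hbs.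
  have Hd2 : unbounded (size xs') (fun xv => exists yv, size yv = size ys /\ below y0 yv /\
      sat (upd_list (upd_list (upd_list e xs' xv) ys yv) (ts ++ [:: x1]) (bs ++ [:: d])) phi).
    apply: unbounded_ext Hd => l [yv [h1 [h2 h3]]]; exists yv; split => //; split => //.
    by rewrite upd_list_cat //= -K1.
  have [yv1 [Hs1 [Hb1 Hu1]]] := IHk phi xs' ys (ts ++ [:: x1]) Hsz Hwf Hu2 Hfv2 M HM e y0 (bs ++ [:: d]) Hbs2 Hd2.
  exists yv1; split => //; split => //.
  apply: (proj2 (Ufor_sat _ Haxs Hafv)).
  apply: unbounded_ext Hu1 => l; rewrite upd_list_cat // K2 K1 //.
have Hu3 : uniq ([:: x1] ++ ys ++ ts).
  rewrite /= mem_cat negb_or Hx1ys Hx1ts /=.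
  by move: Hu'; rewrite cat_uniq => /and3P[].
have Hfv3 : {subset fv U <= [:: x1] ++ ys ++ ts}.
  move=> v /Ufor_fv [Hv Hvx]; move/Hfv: Hv; rewrite /= !(inE, mem_cat) (negbTE Hvx).
  by case: (v == x1); case: (v \in ys); case: (v \in ts).
have [yv1 [Hs1 [Hb1 Hu1]]] := R1 U [:: x1] ys ts erefl (Ufor_wf _ _ Hwf) Hu3 Hfv3 M HM e y0 bs Hbs HA.
exists yv1; split => //; split => //.
move=> c. have [d [Hcd Hd]] := Hu1 c. exists d; split => //.
move: (proj1 (Ufor_sat _ Haxs Hafv) Hd).
apply: unbounded_ext => l; by rewrite K2.
Qed.

Theorem lemma2p3 (L : language) (T : theory L) :
  L_theory T -> complete T -> has_skolem T -> lt_linear T ->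
  (inaccessibility T -> regularity_for (fun n => n = 1%N) T) /\
  (regularity_for (fun n => n = 1%N) T -> regularity_for (fun _ => True) T).
Proof.
move=> _ _ Hsk Hlin; split; first exact: part1.
move=> R1 phi xs ys ts _; exact: (@part2 L T R1 (size xs) phi xs ys ts (erefl (size xs))).
Qed.
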